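(* Every RiFle assignment game (with arbitrary nonnegative real data $(\beta_{ij},\gamma_{ij})$ and an arbitrary assignment of each agent as rigid or flexible) has at least one stable outcome; i.e. the set of stable outcomes is nonempty.
   Context: A RiFle assignment game consists of two disjoint sets of agents $P=\{p_1,\dots,p_n\}$ and $Q=\{q_1,\dots,q_n\}$, a pair of nonnegative real numbers $(\beta_{ij},\gamma_{ij})$ for every pair $(p_i,q_j)\in P\times Q$ (write $\alpha_{ij}=\beta_{ij}+\gamma_{ij}$), and a designation of every agent as either rigid or flexible. Let $\mathcal R$ be the set of pairs $(p_i,q_j)$ in which at least one of $p_i,q_j$ is rigid, and $\mathcal F$ the set of pairs in which both are flexible. An outcome $(\bar u,\bar v;\mu)$ consists of a matching $\mu$ between $P$ and $Q$ (a set of disjoint pairs $(p_i,q_j)$; write $p_i\stackrel{\mu}{\longleftrightarrow} q_j$) and payoff vectors $\bar u=(u_1,\dots,u_n)$, $\bar v=(v_1,\dots,v_n)\in\mathbb R^n$. It is feasible if: (1) $u_i\ge 0$, $v_j\ge 0$ for all $i,j$; (2) if a rigid agent $p_i$ is matched to $q_j$ then $u_i=\beta_{ij}$, and if moreover $q_j$ is flexible then $v_j\ge\gamma_{ij}$; symmetrically, if a rigid agent $q_j$ is matched to $p_i$ then $v_j=\gamma_{ij}$, and if moreover $p_i$ is flexible then $u_i\ge\beta_{ij}$; (3) $\sum_i u_i+\sum_j v_j=\sum_{p_i\stackrel{\mu}{\longleftrightarrow} q_j}\alpha_{ij}$. It is stable if it is feasible and $u_i+v_j\ge\alpha_{ij}$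 for all $(p_i,q_j)\in\mathcal F$, and ($u_i\ge\beta_{ij}$ or $v_j\ge\gamma_{ij}$) for all $(p_i,q_j)\in\mathcal R$. *)

(* Defs.v *)
From mathcomp Require Import all_boot all_order all_algebra.
From mathcomp Require Import reals.
Set Implicit Arguments. Unset Strict Implicit. Unset Printing Implicit Defensive.
Import Order.TTheory GRing.Theory Num.Theory.
Local Open Scope ring_scope.

Record rifle_game (R : realType) (n : nat) := RiFle {
  beta  : 'I_n -> 'I_n -> R;
  gamma : 'I_n -> 'I_n -> R;
  rigidP : 'I_n -> bool;
  rigidQ : 'I_n -> bool
}.

Definition nonneg_data (R : realType) (n : nat) (G : rifle_game R n) : Prop :=
  forall i j, 0 <= beta G i j /\ 0 <= gamma G i j.

Definition alpha (R : realType) (n : nat) (G : rifle_game R n) i j : R :=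
  beta G i j + gamma G i j.

(* A matching: mu i = Some j means p_i <-> q_j, mu i = None means p_i unmatched.
   Disjointness of pairs: mu is injective on its matched values. *)
Definition is_matching (n : nat) (mu : 'I_n -> option 'I_n) : Prop :=
  forall i i' j, mu i = Some j -> mu i' = Some j -> i = i'.

Definition in_calR (R : realType) (n : nat) (G : rifle_game R n) i j : bool :=
  rigidP G i || rigidQ G j.

Definition feasible (R : realType) (n : nat) (G : rifle_game R n)
  (u v : 'I_n -> R) (mu : 'I_n -> option 'I_n) : Prop :=
  is_matching mu /\
  (forall i, 0 <= u i) /\ (forall j, 0 <= v j) /\
  (forall i j, mu i = Some j -> rigidP G i ->
     u i = beta G i j /\ (~~ rigidQ G j -> gamma G i j <= v j)) /\
  (forall i j, mu i = Some j -> rigidQ G j ->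
     v j = gamma G i j /\ (~~ rigidP G i -> beta G i j <= u i)) /\
  (\sum_(i < n) u i + \sum_(j < n) v j =
     \sum_(i < n) (match mu i with Some j => alpha G i j | None => 0 end)).

Definition stable (R : realType) (n : nat) (G : rifle_game R n)
  (u v : 'I_n -> R) (mu : 'I_n -> option 'I_n) : Prop :=
  feasible G u v mu /\
  (forall i j, ~~ in_calR G i j -> alpha G i j <= u i + v j) /\
  (forall i j, in_calR G i j -> beta G i j <= u i \/ gamma G i j <= v j).

(* Main.v *)
Require Import Defs.
From mathcomp Require Import all_boot all_order all_algebra.
From mathcomp Require Import reals.
From Stdlib Require Import Classical.
From mathcomp Require Import ring lra.
Import Order.TTheory GRing.Theory Num.Theory.
Local Open Scope ring_scope.

Section FM.
Variable R : realType.

Lemma sandwich (L U : seq R) :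
  (forall l u, l \in L -> u \in U -> l <= u) ->
  exists t, (forall l, l \in L -> l <= t) /\ (forall u, u \in U -> t <= u).
Proof.
elim: L => [|l L IH] H.
  elim: U {H} => [|u U IHU]; first by exists 0.
  have [t [_ Ht]] := IHU.
  exists (Num.min u t); split => // w; rewrite inE => /orP[/eqP->|wU].
    by rewrite ge_min lexx.
  by rewrite ge_min (Ht _ wU) orbT.
have [t [Ht1 Ht2]] : exists t, (forall l, l \in L -> l <= t) /\ (forall u, u \in U -> t <= u).
  by apply: IH => l' u lL uU; apply: H => //; rewrite inE lL orbT.
exists (Num.max l t); split.
  move=> w; rewrite inE => /orP[/eqP->|wL]; first by rewrite le_max lexx.
  by rewrite le_max (Ht1 _ wL) orbT.
move=> u uU; rewrite ge_max (Ht2 _ uU) andbT.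
by apply: H => //; rewrite inE eqxx.
Qed.

Definition cstr := (nat * nat * R * nat)%type.
Definition satc (e : R) (x : nat -> R) (t : cstr) : bool :=
  t.1.2 - (t.2)%:R * e <= x t.1.1.1 - x t.1.1.2.
Definition inb N (t : cstr) : bool := (t.1.1.1 < N)%N && (t.1.1.2 < N)%N.

Lemma self_le (c : R) (k : nat) : (forall e, 0 < e -> c <= k%:R * e) -> c <= 0.
Proof.
move=> H; rewrite leNgt; apply/negP => c0.
have e0 : 0 < c / (k.+1)%:R by rewrite divr_gt0 // ltr0n.
have Hk : c <= k%:R * (c / (k.+1)%:R) := H _ e0.
have ce : c = c / (k.+1)%:R * (k.+1)%:R by rewrite divfK // pnatr_eq0.
move: Hk ce e0; generalize (c / (k.+1)%:R) => e Hk ce e0.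
rewrite -addn1 natrD mulrDr mulr1 mulrC in ce.
have k0 : 0 <= (k%:R : R) by rewrite ler0n.
by move: Hk; rewrite {1}ce gerDl leNgt e0.
Qed.

Lemma ltS_neq a N : (a < N.+1)%N -> a != N -> (a < N)%N.
Proof. by rewrite ltnS leq_eqVlt => /orP[/eqP->|//]; rewrite eqxx. Qed.
Arguments ltS_neq {a N}.

Lemma FM N (S : seq cstr) : all (inb N) S ->
  (forall e, 0 < e -> exists x, all (satc e x) S) -> exists x, all (satc 0 x) S.
Proof.
elim: N S => [|N IH] S.
  by case: S => [|t S] //= _ _; exists (fun _ => 0).
move=> Hin Hfe.
pose S0 := [seq t <- S | (t.1.1.1 != N) && (t.1.1.2 != N)].
pose Lo := [seq t <- S | (t.1.1.1 == N) && (t.1.1.2 != N)].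
pose Up := [seq t <- S | (t.1.1.1 != N) && (t.1.1.2 == N)].
pose comb (l u : cstr) : cstr := (u.1.1.1, l.1.1.2, l.1.2 + u.1.2, (l.2 + u.2)%N).
pose S' := S0 ++ [seq comb l u | l <- Lo, u <- Up].
have Hin' : all (inb N) S'.
  rewrite all_cat; apply/andP; split.
    apply/allP => t; rewrite mem_filter => /andP[/andP[ha hb] tS].
    move/allP: Hin => /(_ _ tS); rewrite /inb => /andP[h1 h2].
    by rewrite (ltS_neq h1 ha) (ltS_neq h2 hb).
  apply/allP => t /allpairsP[[l u] [/= lL uU ->]].
  move: lL uU; rewrite !mem_filter => /andP[/andP[_ hb] lS] /andP[/andP[ha _] uS].
  move/allP: (Hin) => /(_ _ lS); move/allP: (Hin) => /(_ _ uS).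
  rewrite /inb /comb /= => /andP[h1 _] /andP[_ h2].
  by rewrite (ltS_neq h1 ha) (ltS_neq h2 hb).
have Hfe' : forall e, 0 < e -> exists x, all (satc e x) S'.
  move=> e e0; have [x Hx] := Hfe e e0; exists x.
  rewrite all_cat; apply/andP; split.
    by apply/allP => t; rewrite mem_filter => /andP[_ tS]; move/allP: Hx; apply.
  apply/allP => t /allpairsP[[l u] [/= lL uU ->]].
  move: lL uU; rewrite !mem_filter => /andP[/andP[ha _] lS] /andP[/andP[_ hb] uS].
  move/allP: (Hx) => /(_ _ lS); move/allP: (Hx) => /(_ _ uS).
  rewrite /satc /comb /= (eqP ha) (eqP hb) natrD mulrDl => h1 h2.
  have := lerD h1 h2; congr (_ <= _); ring.
have [x0 Hx0] := IH S' Hin' Hfe'.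
have Hcomb : forall l u, l \in Lo -> u \in Up -> satc 0 x0 (comb l u).
  move=> l u lL uU; move/allP: Hx0; apply; rewrite mem_cat; apply/orP; right.
  by apply/allpairsP; exists (l, u).
have Hlu : forall a b, a \in [seq x0 l.1.1.2 + l.1.2 | l <- Lo] ->
    b \in [seq x0 u.1.1.1 - u.1.2 | u <- Up] -> a <= b.
  move=> a b /mapP[l lL ->] /mapP[u uU ->].
  have := Hcomb l u lL uU; rewrite /satc /comb /= mulr0 subr0 => h.
  move: h; generalize (x0 l.1.1.2) (x0 u.1.1.1) l.1.2 u.1.2 => p q r s; lra.
have [t [Ht1 Ht2]] := sandwich _ _ Hlu.
pose x z := if z == N then t else x0 z.
exists x; apply/allP => c cS.
rewrite /satc /x.
case ha: (c.1.1.1 == N); case hb: (c.1.1.2 == N).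
- rewrite mulr0 subr0 subrr.
  apply: (self_le _ c.2) => e e0.
  have [xe Hxe] := Hfe e e0; move/allP: Hxe => /(_ _ cS); rewrite /satc (eqP ha) (eqP hb) subrr.
  by rewrite subr_le0.
- have cL : c \in Lo by rewrite mem_filter ha hb cS.
  have := Ht1 (x0 c.1.1.2 + c.1.2); rewrite mulr0 subr0.
  by move=> /(_ (map_f _ cL)); rewrite lerBrDr addrC.
- have cU : c \in Up by rewrite mem_filter ha hb cS.
  have := Ht2 (x0 c.1.1.1 - c.1.2); rewrite mulr0 subr0.
  by move=> /(_ (map_f _ cU)); rewrite !lerBrDr addrC.
- have c0 : c \in S0 by rewrite mem_filter ha hb cS.
  by move/allP: Hx0 => /(_ c); rewrite mem_cat c0 => /(_ isT).
Qed.

End FM.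

Lemma finite_bound (X : eqType) (s : seq X) (Q : nat -> X -> Prop) :
  (forall m m' x, (m <= m')%N -> Q m x -> Q m' x) ->
  (forall x, x \in s -> exists m, Q m x) -> exists M, forall x, x \in s -> Q M x.
Proof.
move=> Hmon; elim: s => [|y s IH] H; first by exists 0%N.
have [m Hm] := H y (mem_head _ _).
have [M HM] : exists M, forall x, x \in s -> Q M x.
  by apply: IH => x xs; apply: H; rewrite inE xs orbT.
exists (maxn m M) => x; rewrite inE => /orP[/eqP->|xs].
  by apply: Hmon Hm; rewrite leq_maxl.
by apply: Hmon (HM x xs); rewrite leq_maxr.
Qed.

Lemma pigeon (X : finType) (P : nat -> X -> Prop) :
  (forall m m' x, (m <= m')%N -> P m' x -> P m x) ->
  (forall m, exists x, P m x) -> exists x, forall m, P m x.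
Proof.
move=> Hmon H; apply: NNPP => Hn.
have H2 : forall x, x \in enum X -> exists m, ~ P m x.
  move=> x _; apply: NNPP => Hx; apply: Hn; exists x => m.
  by apply: NNPP => Hm; apply: Hx; exists m.
have [M HM] := @finite_bound X (enum X) (fun m x => ~ P m x) (fun m m' x le h h' => h (Hmon _ _ _ le h')) H2.
have [x Hx] := H M.
by apply: (HM x); rewrite ?mem_enum.
Qed.

Section Key.
Variable R : realType.

Lemma exists_key (C : finType) (f : C -> R) :
  exists k : C -> nat, injective k /\ forall c c', (k c <= k c')%N -> f c <= f c'.
Proof.
pose lt (a b : C) := (f a < f b) || ((f a == f b) && (enum_rank a < enum_rank b)%N).
have lt_irr : forall a, ~~ lt a a by move=> a; rewrite /lt ltxx eqxx ltnn.
have lt_trans : forall a b c, lt a b -> lt b c -> lt a c.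
  move=> a b c; rewrite /lt => /orP[h1|/andP[/eqP e1 h1]] /orP[h2|/andP[/eqP e2 h2]].
  - by rewrite (lt_trans h1 h2).
  - by rewrite -e2 h1.
  - by rewrite e1 h2.
  - by rewrite e1 e2 eqxx (ltn_trans h1 h2) orbT.
have lt_total : forall a b, a != b -> lt a b || lt b a.
  move=> a b ab; rewrite /lt.
  case: (ltgtP (f a) (f b)) => //= _.
  case: (ltngtP (enum_rank a) (enum_rank b)) => //= /val_inj/enum_rank_inj eab.
  by rewrite eab eqxx in ab.
pose k c := #|[set a | lt a c]|.
have kmon : forall a b, lt a b -> (k a < k b)%N.
  move=> a b ab; apply: proper_card; apply/properP; split.
    by apply/subsetP => z; rewrite !inE => za; apply: lt_trans za ab.
  by exists a; rewrite !inE ?ab // lt_irr.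
exists k; split.
  move=> a b kab; apply/eqP; apply: contraT => ab.
  by case/orP: (lt_total _ _ ab) => /kmon; rewrite kab ltnn.
move=> a b kab; rewrite leNgt; apply/negP => fba.
have : lt b a by rewrite /lt fba.
by move/kmon; rewrite ltnNge kab.
Qed.

End Key.

Section GS.
Set Implicit Arguments.
Variables (C P Q : finType) (pc : C -> P) (qc : C -> Q) (kp kq : C -> nat) (V : {set C}).
Hypothesis kp_inj : injective kp.
Hypothesis kq_inj : injective kq.

Definition isbest (A : {set C}) c :=
  (c \in A) && [forall c' in A, (pc c' == pc c) ==> (kp c' <= kp c)%N].

Definition Inv (A : {set C}) := forall c, c \in V -> c \notin A ->
  exists b, [/\ isbest A b, qc b = qc c & (kq c < kq b)%N].

Definition GSconcl := exists M : {set C}, [/\ M \subset V,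
  (forall c1 c2, c1 \in M -> c2 \in M -> pc c1 = pc c2 -> c1 = c2),
  (forall c1 c2, c1 \in M -> c2 \in M -> qc c1 = qc c2 -> c1 = c2) &
  (forall c, c \in V -> (exists b, [/\ b \in M, pc b = pc c & (kp c <= kp b)%N]) \/
                        (exists b, [/\ b \in M, qc b = qc c & (kq c <= kq b)%N]))].

Lemma isbest_sub (A A' : {set C}) b : A' \subset A -> b \in A' -> isbest A b -> isbest A' b.
Proof.
move=> sA bA' /andP[_ /forall_inP H]; rewrite /isbest bA' /=.
by apply/forall_inP => c cA'; apply: H; apply: (subsetP sA).
Qed.

Lemma isbest_uniq (A : {set C}) b1 b2 : isbest A b1 -> isbest A b2 -> pc b1 = pc b2 -> b1 = b2.
Proof.
move=> /andP[b1A /forall_inP H1] /andP[b2A /forall_inP H2] e.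
apply: kp_inj; apply/eqP; rewrite eqn_leq.
by rewrite (implyP (H1 _ b2A)) ?e ?eqxx // (implyP (H2 _ b1A)) ?e ?eqxx.
Qed.

Definition conflict (A : {set C}) (c12 : C * C) :=
  [&& isbest A c12.1, isbest A c12.2, qc c12.1 == qc c12.2 & (kq c12.1 < kq c12.2)%N].

Lemma final (A : {set C}) : A \subset V -> Inv A -> (forall c12, ~~ conflict A c12) -> GSconcl.
Proof.
move=> sAV HI Hnc.
exists [set c | isbest A c]; split.
- apply/subsetP => c; rewrite inE => /andP[cA _]; exact: (subsetP sAV _ cA).
- move=> c1 c2; rewrite !inE => h1 h2 e. exact (isbest_uniq _ h1 h2 e).
- move=> c1 c2; rewrite !inE => h1 h2 e; apply: kq_inj.
  case: (ltngtP (kq c1) (kq c2)) => // lt.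
  + by have := Hnc (c1, c2); rewrite /conflict h1 h2 e eqxx lt.
  + by have := Hnc (c2, c1); rewrite /conflict h1 h2 e eqxx lt.
- move=> c cV; case cA: (c \in A); last first.
    right; have [b [hb e lt]] := HI c cV (negbT cA).
    by exists b; rewrite inE hb e (ltnW lt).
  left; pose b := [arg max_(b > c in [pred x in A | pc x == pc c]) kp b].
  have : [pred x in A | pc x == pc c] c by rewrite /= cA eqxx.
  move=> Hc; rewrite /b; case: (arg_maxnP kp Hc) => b' /andP[b'A /eqP pb'] Hmax.
  exists b'; split => //; last by apply: Hmax; rewrite /= cA eqxx.
  rewrite inE /isbest b'A /=; apply/forall_inP => c' c'A; apply/implyP => /eqP e.
  by apply: Hmax; rewrite /= c'A e pb' eqxx.
Qed.

Lemma step (A : {set C}) c1 c2 : A \subset V -> Inv A -> conflict A (c1, c2) ->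
  [/\ A :\ c1 \subset V, Inv (A :\ c1) & (#|A :\ c1| < #|A|)%N].
Proof.
move=> sAV HI /and4P[/= h1 h2 /eqP e lt].
have c1A : c1 \in A by case/andP: h1.
have c12 : c2 != c1 by apply/eqP => E; move: lt; rewrite E ltnn.
have c2A' : c2 \in A :\ c1 by rewrite !inE c12; case/andP: h2.
have sub : A :\ c1 \subset A by apply: subsetDl.
have h2' : isbest (A :\ c1) c2 := isbest_sub sub c2A' h2.
split.
- exact: subset_trans sub sAV.
- move=> c cV; rewrite !inE negb_and negbK => /orP[/eqP->|cA].
    by exists c2.
  have [b [hb eb ltb]] := HI c cV cA.
  case: (eqVneq b c1) => [E|bc1].
    subst b; exists c2; split => //; first by rewrite -e.
    exact: ltn_trans ltb lt.
  exists b; split => //; apply: (isbest_sub sub _ hb).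
  by rewrite !inE bc1; case/andP: hb.
- by rewrite (cardsD1 c1 A) c1A add1n ltnS; apply: subset_leq_card; rewrite setDE.
Qed.

Lemma GS_main m (A : {set C}) : (#|A| <= m)%N -> A \subset V -> Inv A -> GSconcl.
Proof.
elim: m A => [|m IH] A hA sAV HI.
  apply: (final sAV HI) => -[c1 c2]; apply/negP => /and4P[/andP[c1A _] _ _ _].
  by move: hA; rewrite leqn0 cards_eq0 => /eqP A0; rewrite A0 inE in c1A.
case: (pickP (conflict A)) => [[c1 c2] hc|hn].
  have [s' I' lt'] := step _ _ sAV HI hc.
  by apply: (IH (A :\ c1)) => //; rewrite -ltnS (leq_trans lt').
by apply: (final sAV HI) => c12; rewrite hn.
Qed.

Lemma GS : GSconcl.
Proof.
apply: (@GS_main #|V| V) => //.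
by move=> c cV; rewrite cV.
Qed.

End GS.
Unset Implicit Arguments.

Section Main.
Variables (R : realType) (n : nat) (G : rifle_game R n).
Hypothesis Hnn : nonneg_data G.

Definition Props (e : R) (mu : 'I_n -> option 'I_n) (u v : 'I_n -> R) : Prop :=
  is_matching mu /\ (forall i, 0 <= u i) /\ (forall j, 0 <= v j) /\
  (forall i, mu i = None -> u i = 0) /\
  (forall j, (forall i, mu i <> Some j) -> v j = 0) /\
  (forall i j, mu i = Some j -> in_calR G i j -> u i = beta G i j /\ v j = gamma G i j) /\
  (forall i j, mu i = Some j -> ~~ in_calR G i j -> u i + v j = alpha G i j) /\
  (forall i j, in_calR G i j -> beta G i j <= u i \/ gamma G i j <= v j) /\
  (forall i j, ~~ in_calR G i j -> alpha G i j - e <= u i + v j).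

Lemma alpha_ge0 i j : 0 <= alpha G i j.
Proof. by have [h1 h2] := Hnn i j; rewrite /alpha addr_ge0. Qed.

Lemma eps_outcome e : 0 < e -> exists mu u v, Props e mu u v.
Proof.
move=> e0.
pose A := \sum_(p : 'I_n * 'I_n) alpha G p.1 p.2.
have alA : forall i j, alpha G i j <= A.
  move=> i j; rewrite /A (bigD1 (i, j)) //= lerDl.
  by apply: sumr_ge0 => p _; apply: alpha_ge0.
pose K := (Num.truncn (A / e)).+1.
pose C := ('I_n * 'I_n * 'I_K)%type.
pose ck (c : C) : R := (val c.2)%:R * e.
pose valid (c : C) : bool := if in_calR G c.1.1 c.1.2 then val c.2 == 0%N
                             else ck c <= alpha G c.1.1 c.1.2.
pose vp (c : C) : R := if in_calR G c.1.1 c.1.2 then beta G c.1.1 c.1.2 else ck c.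
pose vq (c : C) : R := if in_calR G c.1.1 c.1.2 then gamma G c.1.1 c.1.2
                       else alpha G c.1.1 c.1.2 - ck c.
have [kp [kpi kpm]] := @exists_key R _ vp.
have [kq [kqi kqm]] := @exists_key R _ vq.
pose V := [set c | valid c].
have [M [sMV upP upQ stab]] := @GS C _ _ (fun c : C => c.1.1) (fun c : C => c.1.2) kp kq V kpi kqi.
pose ci i := [pick c in M | c.1.1 == i].
pose cj j := [pick c in M | c.1.2 == j].
pose mu i := if ci i is Some c then Some c.1.2 else None.
pose u i := if ci i is Some c then vp c else 0.
pose v j := if cj j is Some c then vq c else 0.
have F1 : forall c, c \in M -> ci c.1.1 = Some c.
  move=> c cM; rewrite /ci; case: pickP => [c' /andP[c'M /eqP e1]|/(_ c)].
    by rewrite (upP _ _ c'M cM e1).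
  by rewrite cM eqxx.
have F2 : forall c, c \in M -> cj c.1.2 = Some c.
  move=> c cM; rewrite /cj; case: pickP => [c' /andP[c'M /eqP e1]|/(_ c)].
    by rewrite (upQ _ _ c'M cM e1).
  by rewrite cM eqxx.
have F3 : forall i, ci i = None \/ exists c, [/\ ci i = Some c, c \in M & c.1.1 = i].
  move=> i; rewrite /ci; case: pickP => [c /andP[cM /eqP e1]|_]; last by left.
  by right; exists c.
have F4 : forall j, cj j = None \/ exists c, [/\ cj j = Some c, c \in M & c.1.2 = j].
  move=> j; rewrite /cj; case: pickP => [c /andP[cM /eqP e1]|_]; last by left.
  by right; exists c.
have Mv : forall c, c \in M -> valid c by move=> c /(subsetP sMV); rewrite inE.
have ck0 : forall c, 0 <= ck c by move=> c; rewrite /ck mulr_ge0 // ltW.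
have vp0 : forall c, valid c -> 0 <= vp c.
  by move=> c; rewrite /vp; case: ifP => _ _; [case: (Hnn c.1.1 c.1.2)|].
have vq0 : forall c, valid c -> 0 <= vq c.
  move=> c; rewrite /vq /valid; case: ifP => _; first by case: (Hnn c.1.1 c.1.2).
  by rewrite subr_ge0.
have Hu : forall b, b \in M -> u b.1.1 = vp b by move=> b bM; rewrite /u (F1 _ bM).
have Hv : forall b, b \in M -> v b.1.2 = vq b by move=> b bM; rewrite /v (F2 _ bM).
exists mu, u, v; split; [|split; [|split; [|split; [|split; [|split; [|split; [|split]]]]]]].
- move=> i i' j; rewrite /mu.
  case: (F3 i) => [->//|[c [-> cM ci1]]] [e1].
  case: (F3 i') => [->//|[c' [-> c'M ci1']]] [e2].
  by rewrite -ci1 -ci1' (upQ _ _ cM c'M); rewrite ?e1 ?e2.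
- move=> i; rewrite /u; case: (F3 i) => [->//|[c [-> cM _]]]; exact: vp0 (Mv _ cM).
- move=> j; rewrite /v; case: (F4 j) => [->//|[c [-> cM _]]]; exact: vq0 (Mv _ cM).
- by move=> i; rewrite /u /mu; case: (ci i).
- move=> j H; rewrite /v; case: (F4 j) => [->//|[c [_ cM cj2]]].
  by have := H c.1.1; rewrite /mu (F1 _ cM) cj2.
- move=> i j; rewrite /mu; case: (F3 i) => [->//|[c [E cM ci1]]]; rewrite E => -[cj2] hR.
  rewrite -ci1 -cj2 Hu // Hv // /vp /vq.
  by rewrite -ci1 -cj2 in hR; rewrite hR.
- move=> i j; rewrite /mu; case: (F3 i) => [->//|[c [E cM ci1]]]; rewrite E => -[cj2] hR.
  rewrite -ci1 -cj2 Hu // Hv // /vp /vq.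
  rewrite -ci1 -cj2 in hR; rewrite (negbTE hR); ring.
- move=> i j hR.
  pose c : C := ((i, j), ord0).
  have cV : c \in V by rewrite inE /valid /= hR.
  case: (stab c cV) => [[b [bM pb le]]|[b [bM qb le]]].
    have pb' : b.1.1 = i := pb.
    left; have -> : u i = vp b by rewrite -pb' Hu.
    by have := kpm _ _ le; rewrite {1}/vp /= hR.
  have qb' : b.1.2 = j := qb.
  right; have -> : v j = vq b by rewrite -qb' Hv.
  by have := kqm _ _ le; rewrite {1}/vq /= hR.
- move=> i j hR; rewrite leNgt; apply/negP => hlt.
  have u0 : 0 <= u i.
    by rewrite /u; case: (F3 i) => [->//|[c [-> cM _]]]; exact: vp0 (Mv _ cM).
  have v0 : 0 <= v j.
    by rewrite /v; case: (F4 j) => [->//|[c [-> cM _]]]; exact: vq0 (Mv _ cM).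
  pose k := (Num.truncn (u i / e)).+1.
  have ue0 : 0 <= u i / e by rewrite divr_ge0 // ltW.
  have [t1 t2] := andP (truncn_itv ue0).
  have hk1 : u i < k%:R * e by rewrite -ltr_pdivrMr.
  have hk2 : k%:R * e <= u i + e.
    by rewrite /k -addn1 natrD mulrDl mul1r lerD2r -ler_pdivlMr.
  have hkA : k%:R * e <= A.
    apply: le_trans (alA i j); apply: le_trans hk2 _.
    move: hlt; rewrite ltrBrDr => hlt; apply: ltW; apply: le_lt_trans hlt.
    by rewrite -addrA (addrC (v j)) addrA lerDl.
  have hkK : (k < K)%N.
    have A0 : 0 <= A by apply: le_trans (alA i j); apply: alpha_ge0.
    have Ae0 : 0 <= A / e by rewrite divr_ge0 // ltW.
    have h : (k <= Num.truncn (A / e))%N.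
      by rewrite (truncn_ge_nat _ Ae0) ler_pdivlMr.
    by rewrite /K ltnS.
  pose c : C := ((i, j), Ordinal hkK).
  have hval : k%:R * e <= alpha G i j.
    apply: le_trans hk2 _.
    move: hlt; rewrite ltrBrDr => hlt; apply: ltW; apply: le_lt_trans hlt.
    by rewrite -addrA (addrC (v j)) addrA lerDl.
  have cV : c \in V by rewrite inE /valid /= (negbTE hR).
  case: (stab c cV) => [[b [bM pb le]]|[b [bM qb le]]].
    have pb' : b.1.1 = i := pb.
    have Eu : u i = vp b by rewrite -pb' Hu.
    have := kpm _ _ le; rewrite {1}/vp /= (negbTE hR) /ck /= -Eu.
    by rewrite leNgt hk1.
  have qb' : b.1.2 = j := qb.
  have Ev : v j = vq b by rewrite -qb' Hv.
  have := kqm _ _ le; rewrite {1}/vq /= (negbTE hR) /ck /= -Ev => h.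
  move: h hlt hk2; generalize (k%:R * e) (u i) (v j) (alpha G i j) => x y z w.
  move=> h1 h2 h3.
  have : w <= z + x by rewrite -lerBlDr.
  have : z + x <= z + (y + e) by rewrite lerD2l.
  move: h2; rewrite ltrBrDr => h2 ha hb.
  have := le_trans hb ha; rewrite addrA (addrC z) => hc.
  by have := lt_le_trans h2 hc; rewrite ltxx.
Qed.

End Main.

Lemma sum_match (R : realType) (n : nat) (mu : 'I_n -> option 'I_n) (u v : 'I_n -> R)
  (a : 'I_n -> 'I_n -> R) :
  is_matching mu -> (forall i, mu i = None -> u i = 0) ->
  (forall j, (forall i, mu i <> Some j) -> v j = 0) ->
  (forall i j, mu i = Some j -> u i + v j = a i j) ->
  \sum_(i < n) u i + \sum_(j < n) v j =
  \sum_(i < n) (match mu i with Some j => a i j | None => 0 end).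
Proof.
move=> Hm Hu Hv Ha.
have Ev : \sum_(j < n) v j =
    \sum_(i < n) (match mu i with Some j => v j | None => 0 end).
  transitivity (\sum_(j < n) \sum_(i < n) (if mu i == Some j then v j else 0)).
    apply: eq_bigr => j _.
    case: (pickP (fun i => mu i == Some j)) => [i0 /eqP hi0|hn].
      rewrite (bigD1 i0) ?hi0 ?eqxx //= big1 ?addr0 // => i /negbTE ni.
      case: ifP => // /eqP hi; by rewrite (Hm _ _ _ hi hi0) eqxx in ni.
    rewrite Hv ?big1 // => i; first by rewrite hn.
    by move=> hi; move: (hn i); rewrite hi eqxx.
  rewrite exchange_big; apply: eq_bigr => i _.
  case E: (mu i) => [j|]; last by rewrite big1.
  rewrite (bigD1 j) //= eqxx big1 ?addr0 // => j' nj.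
  by case: ifP => // /eqP [] ej; rewrite ej eqxx in nj.
rewrite Ev -big_split; apply: eq_bigr => i _ /=.
case E: (mu i) => [j|]; first exact: Ha.
by rewrite Hu // addr0.
Qed.

Section Enc.
Variables (R : realType) (n : nat) (G : rifle_game R n).
Hypothesis Hnn : nonneg_data G.

Definition Ui (i : 'I_n) : nat := (val i).+1.
Definition Wj (j : 'I_n) : nat := (n + val j).+1.
Definition unmQ (f : {ffun 'I_n -> option 'I_n}) j := [forall i, f i != Some j].

Definition cP (f : {ffun 'I_n -> option 'I_n}) i : seq (cstr R) :=
  (Ui i, 0%N, 0, 0%N) :: (if f i == None then [:: (0%N, Ui i, 0, 0%N)] else [::]).
Definition cQ (f : {ffun 'I_n -> option 'I_n}) j : seq (cstr R) :=
  (0%N, Wj j, 0, 0%N) :: (if unmQ f j then [:: (Wj j, 0%N, 0, 0%N)] else [::]).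
Definition cPair (f : {ffun 'I_n -> option 'I_n}) (d : {ffun 'I_n * 'I_n -> bool}) i j
  : seq (cstr R) :=
  (if f i == Some j then
     (if in_calR G i j then
        [:: (Ui i, 0%N, beta G i j, 0%N); (0%N, Ui i, - beta G i j, 0%N);
            (0%N, Wj j, gamma G i j, 0%N); (Wj j, 0%N, - gamma G i j, 0%N)]
      else [:: (Ui i, Wj j, alpha G i j, 0%N); (Wj j, Ui i, - alpha G i j, 0%N)])
   else [::]) ++
  (if in_calR G i j then
     [:: if d (i, j) then (Ui i, 0%N, beta G i j, 0%N) else (0%N, Wj j, gamma G i j, 0%N)]
   else [:: (Ui i, Wj j, alpha G i j, 1%N)]).
Definition Sys f d : seq (cstr R) :=
  flatten [seq cP f i | i <- enum 'I_n] ++ flatten [seq cQ f j | j <- enum 'I_n] ++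
  flatten [seq cPair f d p.1 p.2 | p <- enum {: 'I_n * 'I_n}].

Lemma Sys_inb f d : all (@inb R (n + n).+1) (Sys f d).
Proof.
have hU : forall i : 'I_n, (Ui i < (n + n).+1)%N.
  by move=> i; rewrite /Ui ltnS (leq_trans (ltn_ord i)) ?leq_addr.
have hW : forall j : 'I_n, (Wj j < (n + n).+1)%N.
  by move=> j; rewrite /Wj ltnS -addnS leq_add2l ltn_ord.
apply/allP => t; rewrite !mem_cat => /or3P[]/flatten_mapP[p _]; move: t; apply/allP.
- by rewrite /cP; case: ifP => _ /=; rewrite /inb /= hU.
- by rewrite /cQ; case: ifP => _ /=; rewrite /inb /= hW.
- rewrite /cPair all_cat; apply/andP; split.
    by case: ifP => _ //; case: ifP => _ /=; rewrite /inb /= ?hU ?hW.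
  by case: ifP => _ /=; [case: ifP => _ /= |]; rewrite /inb /= ?hU ?hW.
Qed.

Section ToSys.
Variables (e : R) (mu : 'I_n -> option 'I_n) (u v : 'I_n -> R).
Hypothesis HP : Props _ _ G e mu u v.

Definition xof (a : nat) : R :=
  if [pick i | Ui i == a] is Some i then u i
  else if [pick j | Wj j == a] is Some j then - v j else 0.

Lemma xU i : xof (Ui i) = u i.
Proof.
rewrite /xof; case: pickP => [i' /eqP /= e1|/(_ i)]; last by rewrite eqxx.
by congr u; apply: val_inj; move: e1; rewrite /Ui => -[].
Qed.

Lemma xW j : xof (Wj j) = - v j.
Proof.
rewrite /xof; case: pickP => [i' /eqP /= e1|_].
  move: e1; rewrite /Ui /Wj => -[] e1.
  by have := ltn_ord i'; rewrite e1 ltnNge leq_addr.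
case: pickP => [j' /eqP /= e1|/(_ j)]; last by rewrite eqxx.
by congr (- v _); apply: val_inj; move: e1; rewrite /Wj => -[] /eqP; rewrite eqn_add2l => /eqP.
Qed.

Lemma x0 : xof 0 = 0.
Proof.
rewrite /xof; case: (pickP (fun i : 'I_n => Ui i == 0%N)) => [i' /eqP //|_].
by case: (pickP (fun j : 'I_n => Wj j == 0%N)) => [j' /eqP //|_].
Qed.

Lemma toSys : all (satc _ e xof) (Sys [ffun i => mu i] [ffun p => beta G p.1 p.2 <= u p.1]).
Proof.
have [Hm [Hu0 [Hv0 [HuN [HvN [HR [HF [HsR HsF]]]]]]]] := HP.
apply/allP => t; rewrite !mem_cat => /or3P[]/flatten_mapP[p _]; move: t; apply/allP.
- rewrite /cP ffunE; case: ifP => [/eqP hN|_] /=; rewrite /satc /= ?xU ?xW ?x0.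
  all: rewrite ?mulr0n ?mulr1n ?mul0r ?mul1r ?oppr0 ?subr0 ?sub0r ?opprK ?addr0 ?add0r ?andbT.
    by rewrite HuN // oppr0 lexx.
  exact: Hu0.
- rewrite /cQ; case: ifP => [hU|_] /=; rewrite /satc /= ?xU ?xW ?x0.
  all: rewrite ?mulr0n ?mulr1n ?mul0r ?mul1r ?oppr0 ?subr0 ?sub0r ?opprK ?addr0 ?add0r ?andbT.
    rewrite Hv0 HvN ?oppr0 ?lexx // => i E.
    by move/forallP: hU => /(_ i); rewrite ffunE E eqxx.
  exact: Hv0.
- case: p => i j /=; rewrite /cPair ffunE all_cat; apply/andP; split.
    case: eqP => [E|_] //; case: ifP => hR /=; rewrite /satc /= ?xU ?xW ?x0.
    all: rewrite ?mulr0n ?mulr1n ?mul0r ?mul1r ?oppr0 ?subr0 ?sub0r ?opprK ?addr0 ?add0r ?andbT.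
      by have [-> ->] := HR _ _ E hR; rewrite !lexx.
    by rewrite -(HF _ _ E (negbT hR)) lexx /= opprD addrC.
  case: ifP => hR /=; rewrite /satc /= ?xU ?xW ?x0 ?ffunE /=.
  all: rewrite ?mulr0n ?mulr1n ?mul0r ?mul1r ?oppr0 ?subr0 ?sub0r ?opprK ?addr0 ?add0r ?andbT.
    case: ifP => hb /=; rewrite ?xU ?xW ?x0 ?mulr0n ?mul0r ?oppr0 ?subr0 ?sub0r ?opprK ?addr0 ?add0r //.
    by case: (HsR _ _ hR) => //; rewrite hb.
  exact: HsF (negbT hR).
Qed.

End ToSys.
Section FromSys.
Variables (f : {ffun 'I_n -> option 'I_n}) (d : {ffun 'I_n * 'I_n -> bool}) (x : nat -> R).
Hypothesis Hx : all (satc _ 0 x) (Sys f d).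
Hypothesis Hm : is_matching f.


Lemma satP i t : t \in cP f i -> satc _ 0 x t.
Proof.
move=> ti; move/allP: Hx; apply; rewrite !mem_cat; apply/orP; left.
by apply/flatten_mapP; exists i; rewrite ?mem_enum.
Qed.
Lemma satQ j t : t \in cQ f j -> satc _ 0 x t.
Proof.
move=> ti; move/allP: Hx; apply; rewrite !mem_cat; apply/orP; right; apply/orP; left.
by apply/flatten_mapP; exists j; rewrite ?mem_enum.
Qed.
Lemma satPair i j t : t \in cPair f d i j -> satc _ 0 x t.
Proof.
move=> ti; move/allP: Hx; apply; rewrite !mem_cat; apply/orP; right; apply/orP; right.
by apply/flatten_mapP; exists (i, j); rewrite ?mem_enum.
Qed.

Definition uof i := x (Ui i) - x 0%N.
Definition vof j := x 0%N - x (Wj j).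

Theorem fromSys : stable G uof vof f.
Proof.
have U0 : forall i, 0 <= uof i.
  move=> i; have := satP i (Ui i, 0%N, 0, 0%N) (mem_head _ _).
  by rewrite /satc /= mulr0 subr0.
have V0 : forall j, 0 <= vof j.
  move=> j; have := satQ j (0%N, Wj j, 0, 0%N) (mem_head _ _).
  by rewrite /satc /= mulr0 subr0.
have UN : forall i, f i = None -> uof i = 0.
  move=> i E; apply/eqP; rewrite eq_le U0 andbT.
  have := satP i (0%N, Ui i, 0, 0%N); rewrite /cP E eqxx !inE eqxx orbT => /(_ isT).
  by rewrite /satc /= mulr0 subr0 /uof -opprB oppr_ge0.
have VN : forall j, (forall i, f i <> Some j) -> vof j = 0.
  move=> j H; apply/eqP; rewrite eq_le V0 andbT.
  have hU : unmQ f j by apply/forallP => i; apply/eqP; apply: H.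
  have := satQ j (Wj j, 0%N, 0, 0%N); rewrite /cQ hU !inE eqxx orbT => /(_ isT).
  by rewrite /satc /= mulr0 subr0 /vof -opprB oppr_ge0.
have HR : forall i j, f i = Some j -> in_calR G i j ->
    uof i = beta G i j /\ vof j = gamma G i j.
  move=> i j E hR.
  have s := satPair i j; rewrite /cPair E eqxx hR in s.
  have s1 := s (Ui i, 0%N, beta G i j, 0%N).
  have s2 := s (0%N, Ui i, - beta G i j, 0%N).
  have s3 := s (0%N, Wj j, gamma G i j, 0%N).
  have s4 := s (Wj j, 0%N, - gamma G i j, 0%N).
  move: s1 s2 s3 s4; rewrite !mem_cat !inE !eqxx /= ?orbT.
  move=> /(_ isT) s1 /(_ isT) s2 /(_ isT) s3 /(_ isT) s4.
  move: s1 s2 s3 s4; rewrite /satc /= !mulr0 !subr0 /uof /vof => s1 s2 s3 s4.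
  split; apply/eqP; rewrite eq_le.
    by rewrite s1 andbT -lerN2 opprB.
  by rewrite s3 andbT -lerN2 opprB.
have HF : forall i j, f i = Some j -> ~~ in_calR G i j -> uof i + vof j = alpha G i j.
  move=> i j E hR.
  have s := satPair i j; rewrite /cPair E eqxx (negbTE hR) in s.
  have s1 := s (Ui i, Wj j, alpha G i j, 0%N).
  have s2 := s (Wj j, Ui i, - alpha G i j, 0%N).
  move: s1 s2; rewrite !mem_cat !inE !eqxx /= ?orbT.
  move=> /(_ isT) s1 /(_ isT) s2.
  move: s1 s2; rewrite /satc /= !mulr0 !subr0 /uof /vof => s1 s2.
  have -> : x (Ui i) - x 0%N + (x 0%N - x (Wj j)) = x (Ui i) - x (Wj j) by ring.
  apply/eqP; rewrite eq_le s1 andbT -lerN2 opprB.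
  by [].
have SR : forall i j, in_calR G i j -> beta G i j <= uof i \/ gamma G i j <= vof j.
  move=> i j hR.
  have s := satPair i j; rewrite /cPair hR in s.
  case hd: (d (i, j)).
    have := s (Ui i, 0%N, beta G i j, 0%N); rewrite mem_cat hd !inE eqxx orbT.
    by move=> /(_ isT); rewrite /satc /= mulr0 subr0 => h; left.
  have := s (0%N, Wj j, gamma G i j, 0%N); rewrite mem_cat hd !inE eqxx orbT.
  by move=> /(_ isT); rewrite /satc /= mulr0 subr0 => h; right.
have SF : forall i j, ~~ in_calR G i j -> alpha G i j <= uof i + vof j.
  move=> i j hR.
  have s := satPair i j; rewrite /cPair (negbTE hR) in s.
  have := s (Ui i, Wj j, alpha G i j, 1%N); rewrite mem_cat !inE eqxx orbT.
  move=> /(_ isT); rewrite /satc /= mulr0 subr0 /uof /vof.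
  have -> : x (Ui i) - x 0%N + (x 0%N - x (Wj j)) = x (Ui i) - x (Wj j) by ring.
  by [].
split; last first.
  split; first by move=> i j hR; apply: SF.
  by move=> i j hR; apply: SR.
split; first exact: Hm.
split; first exact: U0.
split; first exact: V0.
split.
  move=> i j E hP; have hR : in_calR G i j by rewrite /in_calR hP.
  by have [-> ->] := HR _ _ E hR; split => // _; rewrite lexx.
split.
  move=> i j E hQ; have hR : in_calR G i j by rewrite /in_calR hQ orbT.
  by have [-> ->] := HR _ _ E hR; split => // _; rewrite lexx.
apply: sum_match => //.
move=> i j E; case hR: (in_calR G i j).
  by have [-> ->] := HR _ _ E hR.
by apply: HF => //; rewrite hR.
Qed.

End FromSys.
End Enc.

Lemma satc_mono (R : realType) (e e' : R) x (t : cstr R) :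
  e' <= e -> satc R e' x t -> satc R e x t.
Proof.
rewrite /satc => le h; apply: le_trans h; rewrite lerD2l lerN2.
by apply: ler_wpM2l => //; rewrite ler0n.
Qed.

Unset Implicit Arguments.
Local Open Scope ring_scope.

Theorem theorem1 (R : realType) (n : nat) (G : rifle_game R n) :
  nonneg_data G ->
  exists (u v : 'I_n -> R) (mu : 'I_n -> option 'I_n), stable G u v mu.
Proof.
move=> Hnn.
pose eps (m : nat) : R := ((m.+1)%:R)^-1.
have eps0 : forall m, 0 < eps m by move=> m; rewrite invr_gt0 ltr0n.
pose P m (fd : ({ffun 'I_n -> option 'I_n} * {ffun 'I_n * 'I_n -> bool})%type) :=
  is_matching fd.1 /\ exists x, all (satc R (eps m) x) (Sys _ _ G fd.1 fd.2).
have Hmon : forall m m' fd, (m <= m')%N -> P m' fd -> P m fd.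
  move=> m m' fd le [hm [x hx]]; split => //; exists x.
  apply/allP => t tS; apply: (@satc_mono _ _ (eps m')); last by move/allP: hx; apply.
  by rewrite /eps lef_pV2 ?posrE ?ltr0n // ler_nat ltnS.
have Hex : forall m, exists fd, P m fd.
  move=> m; have [mu [u [v HP]]] := eps_outcome _ _ _ Hnn _ (eps0 m).
  exists ([ffun i => mu i], [ffun p => beta G p.1 p.2 <= u p.1]); split.
    by case: HP => hm _ i i' j /=; rewrite !ffunE; apply: hm.
  by exists (xof _ _ u v); apply: toSys.
have [[f d] Hall] := pigeon _ _ Hmon Hex.
have [hm _] := Hall 0%N.
have [x Hx] : exists x, all (satc R 0 x) (Sys _ _ G f d).
  apply: (FM _ _ _ (Sys_inb _ _ G f d)) => e e0.
  pose m := Num.truncn (e^-1).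
  have [_ [x hx]] := Hall m.
  exists x; apply/allP => t tS; apply: (@satc_mono _ _ (eps m)); last by move/allP: hx; apply.
  rewrite /eps -[e]invrK lef_pV2 ?posrE ?ltr0n ?invr_gt0 //.
  by apply: ltW; apply: truncnS_gt.
by exists (uof _ _ x), (vof _ _ x), f; exact: (fromSys _ _ G f d x Hx hm).
Qed.
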